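(* $N(k,3) = 2k$ for all integers $k \geq 9$.
   Context: A $k$-power is a word of the form $u^k$ (concatenation of $k$ copies of $u$) with $u$ nonempty. A $3$-antipower is a word $u_1u_2u_3$ with $|u_1|=|u_2|=|u_3|$ and $u_1,u_2,u_3$ pairwise distinct. $N(k,r)$ is the smallest integer $\ell$ such that every binary word of length $\ell$ contains either a $k$-power or an $r$-antipower as a factor (contiguous subword). *)

(* Defs.v *)
From mathcomp Require Import all_boot.
Set Implicit Arguments. Unset Strict Implicit. Unset Printing Implicit Defensive.

Definition is_power (k : nat) (w : seq bool) : Prop :=
  exists u : seq bool, u != [::] /\ w = flatten (nseq k u).

Definition is_antipower (r : nat) (w : seq bool) : Prop :=
  exists us : seq (seq bool),
    [/\ size us = r,
        (forall u v, u \in us -> v \in us -> size u = size v),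
        uniq us &
        w = flatten us].

Definition has_power_factor (k : nat) (w : seq bool) : Prop :=
  exists v, infix v w /\ is_power k v.
Definition has_antipower_factor (r : nat) (w : seq bool) : Prop :=
  exists v, infix v w /\ is_antipower r v.

Definition forces (k r l : nat) : Prop :=
  forall w : seq bool, size w = l ->
    has_power_factor k w \/ has_antipower_factor r w.

Definition is_N (k r l : nat) : Prop :=
  forces k r l /\ forall l', forces k r l' -> l <= l'.

(* Main.v *)
Require Import Defs.
From mathcomp Require Import all_boot.
From mathcomp Require Import zify.
From Stdlib Require Import Classical.
Set Implicit Arguments. Unset Strict Implicit. Unset Printing Implicit Defensive.


Definition blk (w : seq bool) i m := mkseq (fun t => nth false w (i + t)) m.
Definition ap_at (w : seq bool) i m :=
  [&& 0 < m, i + 3 * m <= size w,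
      blk w i m != blk w (i + m) m,
      blk w (i + m) m != blk w (i + 2 * m) m &
      blk w i m != blk w (i + 2 * m) m].
Definition has_ap (x : seq bool) :=
  has (fun i => has (fun m => ap_at x i m) (iota 0 13)) (iota 0 13).
Definition alt (x : seq bool) := all (fun t => nth false x t != nth false x t.+1) (iota 0 11).
Definition has6 (x : seq bool) :=
  has (fun t => all (fun u => nth false x (t+u) == nth false x t) (iota 0 6)) (iota 0 7).
Fixpoint all_words n : seq (seq bool) :=
  if n is n'.+1 then map (cons false) (all_words n') ++ map (cons true) (all_words n') else [:: [::]].
Lemma all_wordsP n x : size x = n -> x \in all_words n.
Proof.
elim: n x => [|n IH] [|b x] //= [] /IH Hx.
by rewrite mem_cat; case: b; apply/orP; [right|left]; apply: map_f.
Qed.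
Lemma F_all : all (fun x => [|| has_ap x, alt x | has6 x]) (all_words 12).
Proof. vm_cast_no_check (erefl true). Qed.

Lemma size_blk w i m : size (blk w i m) = m.
Proof. by rewrite size_mkseq. Qed.
Lemma nth_blk w i m t : t < m -> nth false (blk w i m) t = nth false w (i + t).
Proof. by move=> h; rewrite nth_mkseq. Qed.
Lemma blk_take w i m : i + m <= size w -> blk w i m = take m (drop i w).
Proof.
move=> h; apply: (@eq_from_nth _ false); first by rewrite size_blk size_takel // size_drop; lia.
move=> t; rewrite size_blk => ht; rewrite nth_blk // nth_take // nth_drop //.
Qed.
Lemma blk_neq2 w i i' m j : j < m -> nth false w (i + j) != nth false w (i' + j) ->
  blk w i m != blk w i' m.
Proof.
move=> hj hn; apply/eqP => E; move: hn; rewrite -(nth_blk w i hj) E.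
by rewrite nth_blk // eqxx.
Qed.

Lemma infix_td (w : seq bool) i l : infix (take l (drop i w)) w.
Proof.
apply/infixP; exists (take i w), (drop l (drop i w)).
by rewrite !cat_take_drop.
Qed.

Lemma ap_sound w i m : ap_at w i m -> has_antipower_factor 3 w.
Proof.
case/and5P => hm hs h12 h23 h13.
exists (take (3 * m) (drop i w)); split; first exact: infix_td.
exists [:: blk w i m; blk w (i + m) m; blk w (i + 2 * m) m]; split => //.
- by move=> u v; rewrite !inE => /or3P[]/eqP-> /or3P[]/eqP->; rewrite !size_blk.
- by rewrite /= !inE negb_or h12 h13 h23.
- rewrite /= cats0 !blk_take; try lia.
  have -> : 3 * m = m + (m + m) by lia.
  rewrite !takeD !drop_drop.
  have -> : m + i = i + m by lia.
  by have -> : m + (i + m) = i + 2 * m by lia.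
Qed.

Lemma ap_window w i j m : i + 12 <= size w -> ap_at (blk w i 12) j m -> ap_at w (i + j) m.
Proof.
move=> hs; case/and5P => hm; rewrite size_blk => hjm h12 h23 h13.
have E : forall a, a + m <= 12 -> blk (blk w i 12) a m = blk w (i + a) m.
  move=> a ha; apply: (@eq_from_nth _ false); first by rewrite !size_blk.
  move=> t; rewrite size_blk => ht.
  by rewrite !nth_blk ?addnA //; lia.
rewrite !E in h12 h23 h13; try lia.
have e1 : i + (j + m) = i + j + m by lia.
have e2 : i + (j + 2 * m) = i + j + 2 * m by lia.
rewrite e1 e2 addnA in h12 h23 h13 *.
have e3 : i + j + 2 * m = i + j + m + (m + 0)%coq_nat by lia.
by apply/and5P; split => //; [lia | rewrite e3 | rewrite e3].
Qed.


Lemma long_gap (w : seq bool) p q d : p < q -> q < size w -> 7 <= q - p ->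
  2 <= p + (size w - 1 - q) -> nth false w p = d -> nth false w q = d ->
  (forall t, p < t < q -> nth false w t = ~~ d) -> exists i m, ap_at w i m.
Proof.
move=> hpq hq hg hroom hp hqd hmid.
set g := q - p.
set m := (g + 3) %/ 3.
have hm : 3 * m <= g + 3 /\ g + 3 < 3 * m + 3 by rewrite /m; lia.
set tt := 3 * m - 1 - g.
set j := minn p tt.
set j' := m - 1 - (tt - j).
have hm3 : 3 <= m by lia.
have hjj : j < j' by rewrite /j' /j /tt; lia.
have hj'm : j' < m by rewrite /j'; lia.
exists (p - j), m; apply/and5P; split.
- lia.
- rewrite /j /tt; lia.
- apply: (@blk_neq2 _ _ _ _ j) => //; first lia.
  have -> : p - j + j = p by rewrite /j; lia.
  rewrite hp hmid; first by case: d {hp hqd hmid}.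
  rewrite /j /tt; lia.
- apply: (@blk_neq2 _ _ _ _ j') => //.
  have -> : p - j + 2 * m + j' = q by rewrite /j' /j /tt; lia.
  rewrite hqd hmid; first by case: d {hp hqd hmid}.
  rewrite /j' /j /tt; lia.
- apply: (@blk_neq2 _ _ _ _ j) => //; first lia.
  have -> : p - j + j = p by rewrite /j; lia.
  rewrite hp hmid; first by case: d {hp hqd hmid}.
  rewrite /j' /j /tt; lia.
Qed.


Definition run (w : seq bool) c s e := forall u, s <= u < e -> nth false w u = c.

Lemma ext_right w c r : forall s e, size w - e = r -> e <= size w -> run w c s e ->
  exists e', [/\ e <= e', e' <= size w, run w c s e' & (e' = size w \/ nth false w e' != c)].
Proof.
elim: r => [|r IH] s e hr he hrun.
  by exists e; split => //; left; lia.
case hc: (nth false w e == c).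
  have hr' : run w c s e.+1.
    move=> u hu; case: (ltnP u e) => hue; first by apply: hrun; lia.
    have -> : u = e by lia.
    exact/eqP.
  have [e' [h1 h2 h3 h4]] := IH s e.+1 ltac:(lia) ltac:(lia) hr'.
  by exists e'; split => //; lia.
by exists e; split => //; right; rewrite hc.
Qed.

Lemma ext_left w c s : forall e, run w c s e ->
  exists s', [/\ s' <= s, run w c s' e & (s' = 0 \/ nth false w s'.-1 != c)].
Proof.
elim: s => [|s IH] e hrun; first by exists 0; split => //; left.
case hc: (nth false w s == c).
  have hr' : run w c s e.
    move=> u hu; case: (ltnP s u) => hue; first by apply: hrun; lia.
    have -> : u = s by lia.
    exact/eqP.
  have [s' [h1 h2 h3]] := IH e hr'.
  by exists s'; split => //; lia.
by exists s.+1; split => //; right; rewrite /= hc.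
Qed.

Lemma window w i : i + 12 <= size w -> (forall i m, ~~ ap_at w i m) ->
  (forall t, i <= t < i + 11 -> nth false w t != nth false w t.+1) \/
  (exists t, t <= 6 /\ run w (nth false w (i + t)) (i + t) (i + t + 6)).
Proof.
move=> hs NA.
have := allP F_all (blk w i 12) (all_wordsP (size_blk w i 12)).
case/or3P.
- rewrite /has_ap => /hasP[j]; rewrite mem_iota => /andP[_ hj] /hasP[m]; rewrite mem_iota => /andP[_ hm].
  move=> /(ap_window hs) h; by move: (NA (i + j) m); rewrite h.
- rewrite /alt => /allP H; left => t ht.
  have e1 : i + (t - i) = t by lia.
  have e2 : i + (t - i).+1 = t.+1 by lia.
  have := H (t - i); rewrite mem_iota => /(_ ltac:(lia)).
  rewrite !nth_blk; try lia.
  by rewrite e1 e2.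
- rewrite /has6 => /hasP[t]; rewrite mem_iota => /andP[_ ht] /allP H; right; exists t; split; first lia.
  move=> u hu; have e1 : i + (t + (u - (i + t))) = u by lia.
  have := H (u - (i + t)); rewrite mem_iota => /(_ ltac:(lia)) /eqP.
  rewrite !nth_blk; try lia.
  by rewrite e1.
Qed.

Lemma neq_negb (a c : bool) : a != c -> a = ~~ c.
Proof. by case: a; case: c. Qed.

Lemma core w k : 9 <= k -> size w = 2 * k ->
  (forall s c, s + k <= 2 * k -> ~ run w c s (s + k)) ->
  (forall i m, ~~ ap_at w i m) ->
  forall t, t.+1 < 2 * k -> nth false w t != nth false w t.+1.
Proof.
move=> hk hs NR NA.
have six : forall t c, k - 6 <= t <= k -> run w c t (t + 6) -> False.
  move=> t c ht hr.
  have [e [he1 he2 hre hee]] := ext_right (erefl (size w - (t + 6))) ltac:(lia) hr.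
  have [s' [hs1 hrs hss]] := ext_left hre.
  case: hss => [hs0|hs0].
    apply: (NR 0 c ltac:(lia)) => u hu; apply: hrs; rewrite hs0; lia.
  case: hee => [he0|he0].
    apply: (NR s' c ltac:(lia)) => u hu; apply: hrs; lia.
  have hlen : e - s' < k.
    case: (ltnP (e - s') k) => // hh; exfalso.
    apply: (NR s' c ltac:(lia)) => u hu; apply: hrs; lia.
  have hsp : 0 < s'.
    case: (posnP s') => // h0; exfalso.
    by apply: (NR 0 c ltac:(lia)) => u hu; apply: hrs; lia.
  have [i [m hap]] := @long_gap w s'.-1 e (~~ c) ltac:(lia) ltac:(lia) ltac:(lia) ltac:(lia)
    (neq_negb hs0)
    (neq_negb he0)
    ltac:(by move=> u hu; rewrite negbK; apply: hrs; lia).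
  by move: (NA i m); rewrite hap.
have mid : forall t, k - 6 <= t < k + 5 -> nth false w t != nth false w t.+1.
  case: (@window w (k - 6) ltac:(lia) NA) => [H|[t [ht hr]]].
  - move=> t ht; apply: H; lia.
  - by exfalso; apply: (six (k - 6 + t) _ ltac:(lia) hr).
have up : forall d, k - 6 + d + 12 <= 2 * k ->
    forall t, k - 6 <= t < k - 6 + d + 11 -> nth false w t != nth false w t.+1.
  elim => [|d IH] hd t ht; first by apply: mid; lia.
  case: (ltnP t (k - 6 + d + 11)) => htt; first by apply: IH; lia.
  case: (@window w (k - 6 + d.+1) ltac:(lia) NA) => [H|[t' [ht' hr]]].
  - apply: H; lia.
  - exfalso; have := IH ltac:(lia) (k - 6 + d.+1 + t') ltac:(lia).
    rewrite (hr (k - 6 + d.+1 + t').+1) ?eqxx //; lia.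
have down : forall d, d <= k - 6 ->
    forall t, k - 6 - d <= t < k + 5 -> nth false w t != nth false w t.+1.
  elim => [|d IH] hd t ht; first by apply: mid; lia.
  case: (leqP (k - 6 - d) t) => htt; first by apply: IH; lia.
  case: (@window w (k - 6 - d.+1) ltac:(lia) NA) => [H|[t' [ht' hr]]].
  - apply: H; lia.
  - exfalso; have := IH ltac:(lia) (k - 6 - d.+1 + t' + 4) ltac:(lia).
    rewrite (hr (k - 6 - d.+1 + t' + 4)) ?(hr (k - 6 - d.+1 + t' + 4).+1) ?eqxx //; lia.
move=> t ht; case: (leqP (k - 6) t) => h.
  by apply: (up (k - 6)); lia.
by apply: (down (k - 6)); lia.
Qed.


Lemma size_flat_nseq k (u : seq bool) : size (flatten (nseq k u)) = k * size u.
Proof. elim: k => //= k IH; rewrite size_cat IH; lia. Qed.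

Lemma flat_nseq1 k (b : bool) : flatten (nseq k [:: b]) = nseq k b.
Proof. by elim: k => //= k ->. Qed.

Lemma flat_alt k (a : bool) t : t < 2 * k ->
  nth false (flatten (nseq k [:: a; ~~ a])) t = (if odd t then ~~ a else a).
Proof.
elim: k t => [|k IH] t ht; first lia.
case: t ht => [|[|t]] ht //=.
rewrite negbK; have := IH t ltac:(lia); by case: (odd t).
Qed.

Lemma alt_nth (w : seq bool) n : (forall t, t.+1 < n -> nth false w t != nth false w t.+1) ->
  forall t, t < n -> nth false w t = (if odd t then ~~ nth false w 0 else nth false w 0).
Proof.
move=> H; elim => [|t IH] ht //=.
have := H t ht; rewrite IH; last lia.
by case: (odd t); case: (nth false w 0); case: (nth false w t.+1).
Qed.

Lemma infix_nth (v z : seq bool) : infix v z ->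
  exists i, i + size v <= size z /\ forall t, t < size v -> nth false v t = nth false z (i + t).
Proof.
case/infixP => s1 [s2 ->]; exists (size s1); split.
  by rewrite !size_cat leq_add2l leq_addr.
move=> t ht; rewrite nth_cat ltnNge leq_addr /= addKn.
by rewrite nth_cat ht.
Qed.

Lemma run_power k (w : seq bool) s c : 0 < k -> s + k <= size w -> run w c s (s + k) ->
  has_power_factor k w.
Proof.
move=> hk hs hr; exists (take k (drop s w)); split; first exact: infix_td.
exists [:: c]; split => //; rewrite flat_nseq1.
apply: (@eq_from_nth _ false); first by rewrite size_nseq size_takel // size_drop; lia.
move=> t; rewrite size_takel; last by rewrite size_drop; lia.
move=> ht; rewrite nth_take // nth_drop nth_nseq ht; apply: hr; lia.
Qed.

Lemma upper k : 9 <= k -> forces k 3 (2 * k).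
Proof.
move=> hk w hs.
case: (classic (exists s c, s + k <= 2 * k /\ run w c s (s + k))) => [[s [c [h1 h2]]]|NR].
  by left; apply: (run_power (s := s) (c := c)) => //; lia.
case: (classic (exists i m, ap_at w i m)) => [[i [m h]]|NA].
  by right; apply: (ap_sound h).
have Halt := core hk hs (fun s c h1 h2 => NR (ex_intro _ s (ex_intro _ c (conj h1 h2))))
  (fun i m => introN idP (fun h => NA (ex_intro _ i (ex_intro _ m h)))).
left; exists w; split; first exact: infix_refl.
exists [:: nth false w 0; ~~ nth false w 0]; split => //.
apply: (@eq_from_nth _ false); first by rewrite size_flat_nseq hs /=; lia.
move=> t ht; rewrite flat_alt; last lia.
by apply: (alt_nth Halt); lia.
Qed.


Lemma lower k l : 9 <= k -> l < 2 * k -> ~ forces k 3 l.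
Proof.
move=> hk hl F.
set z := take l (nseq k.-1 false ++ true :: nseq k.-1 false).
have hsz : size z = l by rewrite size_takel // size_cat /= !size_nseq; lia.
have nthz : forall t, t < l -> nth false z t = (t == k.-1).
  move=> t ht; rewrite nth_take // nth_cat size_nseq.
  case: (ltnP t k.-1) => h1; first by rewrite nth_nseq h1; symmetry; apply/eqP; lia.
  case: (eqVneq t k.-1) => [->|hne]; first by rewrite subnn.
  have -> : t - k.-1 = (t - k.-1).-1.+1 by lia.
  by rewrite /= nth_nseq; case: ifP.
case: (F z hsz) => [[v [hv [u [hu hvu]]]]|[v [hv [us [hus hsize huniq hvus]]]]].
- have [i [hi hn]] := infix_nth hv.
  have hsv : size v = k * size u by rewrite hvu size_flat_nseq.
  case: u hu hvu hsv => [|b [|b' u]] // _ hvu hsv; last by rewrite /= in hsv; lia.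
  rewrite flat_nseq1 in hvu.
  have hik : i + k <= l by move: hi; rewrite hsv hsz /=; lia.
  have hv1 : forall t, t < k -> nth false z (i + t) = b.
    move=> t ht; have htv : t < size v by rewrite hsv /=; lia.
    by rewrite -hn // hvu nth_nseq ht.
  have e1 := hv1 (k.-1 - i) ltac:(lia).
  have e2 := hv1 (if k.-1 - i == 0 then 1 else 0) ltac:(case: ifP => _; lia).
  rewrite nthz in e1; last lia.
  rewrite nthz in e2; last by case: ifP => _; lia.
  have ek : i + (k.-1 - i) = k.-1 by lia.
  rewrite ek in e1.
  have ef : (i + (if k.-1 - i == 0 then 1 else 0) == k.-1) = false.
    by case: ifP => /eqP ?; apply/eqP; lia.
  by rewrite eqxx in e1; rewrite ef -e1 in e2.
- case: us hus hsize huniq hvus => [|b1 [|b2 [|b3 [|? ?]]]] // _ hsize huniq hvus.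
  rewrite /= cats0 in hvus.
  have [i [hi hn]] := infix_nth hv.
  have [m h1] : exists m, size b1 = m by eauto.
  have h2 : size b2 = m by rewrite -h1; apply: hsize; rewrite !inE eqxx ?orbT.
  have h3 : size b3 = m by rewrite -h1; apply: hsize; rewrite !inE eqxx ?orbT.
  have hsv : size v = 3 * m by rewrite hvus !size_cat h1 h2 h3; lia.
  have hi' : i + 3 * m <= l by rewrite -hsv -hsz; exact: hi.
  have zb : forall b o, size b = m -> o + m <= 3 * m ->
      (forall t, t < m -> nth false b t = nth false v (o + t)) ->
      (k.-1 < i + o \/ i + o + m <= k.-1) -> b = nseq m false.
    move=> b o hb ho hbt hout; apply: (@eq_from_nth _ false); first by rewrite size_nseq.
    move=> t; rewrite hb => ht; rewrite nth_nseq ht hbt //.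
    have hot : o + t < size v by lia.
    rewrite hn //.
    have hl2 : i + (o + t) < l by lia.
    by rewrite nthz //; apply/eqP; lia.
  have e1 : forall t, t < m -> nth false b1 t = nth false v (0 + t).
    by move=> t ht; rewrite hvus nth_cat h1 ht.
  have e2 : forall t, t < m -> nth false b2 t = nth false v (m + t).
    by move=> t ht; rewrite hvus nth_cat h1 ltnNge leq_addr /= addKn nth_cat h2 ht.
  have e3 : forall t, t < m -> nth false b3 t = nth false v (2 * m + t).
    move=> t ht; rewrite hvus nth_cat h1 ltnNge (_ : m <= 2 * m + t) /=; last lia.
    rewrite nth_cat h2 ltnNge (_ : m <= 2 * m + t - m) /=; last lia.
    by congr nth; lia.
  case: (ltnP k.-1 (i + m)) => c1.
    have E2 := zb b2 m h2 ltac:(lia) e2 ltac:(lia).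
    have E3 := zb b3 (2 * m) h3 ltac:(lia) e3 ltac:(lia).
    by move: huniq; rewrite E2 E3 /= !inE eqxx /= !andbF.
  have E1 := zb b1 0 h1 ltac:(lia) e1 ltac:(lia).
  case: (ltnP k.-1 (i + 2 * m)) => c2.
    have E3 := zb b3 (2 * m) h3 ltac:(lia) e3 ltac:(lia).
    by move: huniq; rewrite E1 E3 /= !inE eqxx /= !orbT.
  have E2 := zb b2 m h2 ltac:(lia) e2 ltac:(lia).
  by move: huniq; rewrite E1 E2 /= !inE eqxx.
Qed.


Theorem theorem7 (k : nat) (hk : 9 <= k) : is_N k 3 (2 * k).
Proof.
split; first exact: upper.
move=> l' F; rewrite leqNgt; apply/negP => hl.
exact: (lower hk hl F).
Qed.
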